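(* Let $H$ be a Hermitian operator on a $d$-dimensional Hilbert space with spectral decomposition $H=\sum_{i=1}^M\lambda_i\Pi_i$, where $\lambda_M>\cdots>\lambda_1$ are the distinct eigenvalues and $\Pi_i$ the spectral projections ($\Pi_i\Pi_j=\delta_{ij}\Pi_i$, $\sum_i\Pi_i=I$), and let $\beta\ge 0$. Write $\gamma=\frac{\Pi_1}{\operatorname{Tr}[\Pi_1]}$ and $\tau_\beta=\frac{e^{-\beta H}}{\operatorname{Tr}[e^{-\beta H}]}$. Then $$\frac{1}{2}\|\tau_\beta-\gamma\|_1=1-F(\tau_\beta,\gamma)\qquad\text{and}\qquad D(\gamma\|\tau_\beta)=-\ln F(\tau_\beta,\gamma).$$
   Context: $\|A\|_1=\operatorname{Tr}[\sqrt{A^\dagger A}]$; $F(\rho,\sigma)=\|\sqrt{\rho}\sqrt{\sigma}\|_1^2$ is the fidelity; $D(\rho\|\sigma)=\operatorname{Tr}[\rho(\ln\rho-\ln\sigma)]$ is the quantum relative entropy. *)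

(* Defs.v *)
From HB Require Import structures.
From mathcomp Require Import all_boot all_order all_algebra.
From mathcomp Require Import sesquilinear spectral.
From mathcomp Require Import complex.
From mathcomp Require Import reals sequences exp.

Set Implicit Arguments.
Unset Strict Implicit.
Unset Printing Implicit Defensive.

Import Order.TTheory GRing.Theory Num.Theory.
Local Open Scope ring_scope.

Definition adjmx (R : rcfType) m n (A : 'M[R[i]]_(m, n)) : 'M[R[i]]_(n, m) :=
  map_mx (@Num.conj _) A^T.

Definition herm_op (R : rcfType) n (A : 'M[R[i]]_n) : Prop := adjmx A = A.

(* Functional calculus for a Hermitian matrix, via the spectral theorem
   (A = P^-1 diag(sp) P with P unitary, sp real):
   f(A) := P^-1 diag(f(sp)) P. *)
Definition mxfun (R : rcfType) n (f : R -> R) (A : 'M[R[i]]_n) : 'M[R[i]]_n :=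
  invmx (spectralmx A) *m
  diag_mx (map_mx (fun z : R[i] => ((f (complex.Re z))%:C)%C) (spectral_diag A))
  *m spectralmx A.

Definition mxsqrt (R : rcfType) n (A : 'M[R[i]]_n) := mxfun (@Num.sqrt R) A.
Definition mxexp (R : realType) n (A : 'M[R[i]]_n) := mxfun (@expR R) A.
(* ln is applied to the spectrum; the value at eigenvalue 0 is irrelevant
   in D(rho||sigma) for rho's kernel (it is multiplied by 0). *)
Definition mxln (R : realType) n (A : 'M[R[i]]_n) := mxfun (@ln R) A.

(* Trace norm ||A||_1 = Tr sqrt(A^dagger A)  (the trace is real; we take
   its real part to obtain an element of R). *)
Definition trnorm (R : rcfType) n (A : 'M[R[i]]_n) : R :=
  complex.Re (\tr (mxsqrt (adjmx A *m A))).

Definition fidelity (R : rcfType) n (rho sigma : 'M[R[i]]_n) : R :=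
  trnorm (mxsqrt rho *m mxsqrt sigma) ^+ 2.

Definition relent (R : realType) n (rho sigma : 'M[R[i]]_n) : R :=
  complex.Re (\tr (rho *m (mxln rho - mxln sigma))).

(* Main.v *)
Require Import Defs.
From HB Require Import structures.
From mathcomp Require Import all_boot all_order all_algebra.
From mathcomp Require Import sesquilinear spectral.
From mathcomp Require Import complex.
From mathcomp Require Import reals sequences exp.
Import Order.TTheory GRing.Theory Num.Theory.
Local Open Scope ring_scope.
Set Implicit Arguments.
Unset Strict Implicit.

Lemma adjmxE (R : rcfType) m n (A : 'M[R[i]]_(m, n)) i j : adjmx A i j = Num.conj (A j i).
Proof. by rewrite !mxE. Qed.

Lemma normal_adj (R : rcfType) n (A : 'M[R[i]]_n) : adjmx A = A -> A \is normalmx.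
Proof. by move=> h; rewrite qualifE; move: h; rewrite /adjmx => ->. Qed.

Lemma mxfun_spec (R : rcfType) n (A : 'M[R[i]]_n) (I : finType) (Pi : I -> 'M[R[i]]_n)
  (c : I -> R) (f : R -> R) :
  A \is normalmx -> (forall i, A *m Pi i = (c i)%:C%C *: Pi i) -> \sum_i Pi i = 1%:M ->
  mxfun f A = \sum_i (f (c i))%:C%C *: Pi i.
Proof.
move=> /orthomx_spectralP Aeq hA hs.
have Pu := spectral_unit A.
set P := spectralmx A in Aeq Pu *.
set s := spectral_diag A in Aeq *.
pose Q i := P *m Pi i *m invmx P.
have Deq : diag_mx s = P *m A *m invmx P.
  by rewrite [in RHS]Aeq !mulmxA mulmxV // mul1mx -!mulmxA mulmxV // mulmx1.
have DQ i : diag_mx s *m Q i = (c i)%:C%C *: Q i.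
  rewrite Deq /Q !mulmxA -(mulmxA _ (invmx P)) mulVmx // mulmx1.
  by rewrite -(mulmxA P A) hA -scalemxAr -!scalemxAl.
rewrite /mxfun -/P.
set s' := map_mx _ _.
have DfQ i : diag_mx s' *m Q i = (f (c i))%:C%C *: Q i.
  move: (Q i) (DQ i) => X DX.
  apply/matrixP => k l; move/matrixP: DX => /(_ k l).
  rewrite !mul_diag_mx !mxE.
  have [->|nz] := eqVneq (X k l) 0; first by rewrite !mulr0.
  by move=> /(mulIf nz) ->.
have sQ : \sum_i Q i = 1%:M.
  by rewrite /Q -mulmx_suml -mulmx_sumr hs mulmx1 mulmxV.
rewrite -[diag_mx s']mulmx1 -sQ !mulmx_sumr mulmx_suml.
apply: eq_bigr => i _.
rewrite DfQ -scalemxAr -scalemxAl /Q !mulmxA mulVmx // mul1mx.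
by rewrite -mulmxA mulVmx // mulmx1.
Qed.

Section Comb.
Variables (R : realType) (d M : nat) (Pi : 'I_M.+1 -> 'M[R[i]]_d).
Hypothesis hPP : forall i j, Pi i *m Pi j = if i == j then Pi i else 0.
Hypothesis hsum : \sum_i Pi i = 1%:M.
Hypothesis hherm : forall i, adjmx (Pi i) = Pi i.
Hypothesis hnz : forall i, Pi i != 0.

Definition comb (x : 'I_M.+1 -> R) := \sum_i (x i)%:C%C *: Pi i.

Lemma comb_mulPi x j : comb x *m Pi j = (x j)%:C%C *: Pi j.
Proof.
rewrite /comb mulmx_suml (bigD1 j) //= big1 ?addr0.
  by rewrite -scalemxAl hPP eqxx.
by move=> i /negbTE hij; rewrite -scalemxAl hPP hij scaler0.
Qed.

Lemma comb_mul x y : comb x *m comb y = comb (fun i => x i * y i).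
Proof.
rewrite {2}/comb mulmx_sumr; apply: eq_bigr => i _.
by rewrite -scalemxAr comb_mulPi scalerA -rmorphM mulrC.
Qed.

Lemma comb_sub x y : comb x - comb y = comb (fun i => x i - y i).
Proof.
by rewrite /comb -sumrB; apply: eq_bigr => i _; rewrite rmorphB scalerBl.
Qed.

Lemma comb_scale c x : c%:C%C *: comb x = comb (fun i => c * x i).
Proof.
by rewrite /comb scaler_sumr; apply: eq_bigr => i _; rewrite scalerA rmorphM.
Qed.

Lemma conjC_real (r : R) : Num.conj (r%:C%C) = r%:C%C.
Proof.
apply: conj_Creal; rewrite realE !lecR.
by case: (lerP 0 r) => // /ltW ->; rewrite orbT.
Qed.

Lemma adjmx_comb x : adjmx (comb x) = comb x.
Proof.
apply/matrixP => k l; rewrite adjmxE !summxE rmorph_sum /=.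
apply: eq_bigr => i _; rewrite !mxE rmorphM /= conjC_real.
by rewrite -adjmxE hherm.
Qed.

Lemma comb_normal x : comb x \is normalmx.
Proof. exact/normal_adj/adjmx_comb. Qed.

Lemma mxfun_comb f x : mxfun f (comb x) = comb (fun i => f (x i)).
Proof. by apply: mxfun_spec => //; [exact: comb_normal | exact: comb_mulPi]. Qed.

Lemma trPi i : \tr (Pi i) = \sum_k \sum_l `|Pi i k l| ^+ 2.
Proof.
have -> : \tr (Pi i) = \tr (Pi i *m adjmx (Pi i)) by rewrite hherm hPP eqxx.
rewrite /mxtrace; apply: eq_bigr => k _; rewrite mxE; apply: eq_bigr => l _.
by rewrite adjmxE normCK.
Qed.

Definition t i := complex.Re (\tr (Pi i)).

Lemma trPi_ge0 i : 0 <= \tr (Pi i).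
Proof. by rewrite trPi; apply: sumr_ge0 => k _; apply: sumr_ge0 => l _; apply: exprn_ge0. Qed.

Lemma trPiE i : \tr (Pi i) = (t i)%:C%C.
Proof.
rewrite /t complexRe; apply/esym/Creal_ReP; exact: ger0_real (trPi_ge0 i).
Qed.

Lemma t_gt0 i : 0 < t i.
Proof.
rewrite -ltcR -trPiE lt0r trPi_ge0 andbT; apply/negP => /eqP h0.
apply: (negP (hnz i)); apply/eqP/matrixP => k l.
rewrite mxE; move: h0; rewrite trPi => h0.
have h1 : \sum_l `|Pi i k l| ^+ 2 = 0.
  apply: (psumr_eq0P _ h0) => // k' _; apply: sumr_ge0 => l' _; exact: exprn_ge0.
have : `|Pi i k l| ^+ 2 = 0.
  apply: (psumr_eq0P _ h1) => // l' _; exact: exprn_ge0.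
by move=> /eqP; rewrite expf_eq0 /= normr_eq0 => /eqP.
Qed.

Lemma tr_comb x : \tr (comb x) = (\sum_i x i * t i)%:C%C.
Proof.
rewrite /comb raddf_sum rmorph_sum; apply: eq_bigr => i _.
by rewrite /= mxtraceZ trPiE rmorphM.
Qed.

Lemma trnorm_comb x : trnorm (comb x) = \sum_i `|x i| * t i.
Proof.
rewrite /trnorm /mxsqrt adjmx_comb comb_mul mxfun_comb tr_comb /=.
by apply: eq_bigr => i _; rewrite -expr2 sqrtr_sqr.
Qed.

End Comb.
From mathcomp Require Import ring lra.

Theorem corollary4 (R : realType) (d M : nat) (H : 'M[R[i]]_d)
  (lam : 'I_M.+1 -> R) (Pi : 'I_M.+1 -> 'M[R[i]]_d) (beta : R) :
  herm_op H ->
  (forall i j : 'I_M.+1, (i < j)%N -> lam i < lam j) ->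
  (forall i, Pi i != 0) ->
  (forall i, herm_op (Pi i)) ->
  (forall i j, Pi i *m Pi j = if i == j then Pi i else 0) ->
  \sum_(i < M.+1) Pi i = 1%:M ->
  H = \sum_(i < M.+1) (lam i)%:C%C *: Pi i ->
  0 <= beta ->
  let gamma := (\tr (Pi ord0))^-1 *: Pi ord0 in
  let E := mxexp ((- beta)%:C%C *: H) in
  let tau := (\tr E)^-1 *: E in
  2^-1 * trnorm (tau - gamma) = 1 - fidelity tau gamma /\
  relent gamma tau = - ln (fidelity tau gamma).
Proof.
move=> _ _ hnz hherm hPP hsum hH _ gamma E tau.
have hH' : H = comb Pi lam by [].
pose e i := expR (- beta * lam i).
have hE : E = comb Pi e.
  by rewrite /E hH' comb_scale /mxexp mxfun_comb.
pose t0 := t Pi ord0.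
have t0_gt0 : 0 < t0 := t_gt0 hPP hherm hnz ord0.
pose Z := \sum_i e i * t Pi i.
have Z_gt0 : 0 < Z.
  rewrite /Z (bigD1 ord0) //=; apply: ltr_wpDr.
    apply: sumr_ge0 => i _; apply: mulr_ge0; first exact/ltW/expR_gt0.
    exact/ltW/(t_gt0 hPP hherm hnz).
  by apply: mulr_gt0; [exact: expR_gt0 | exact: t0_gt0].
pose w i := Z^-1 * e i.
have htau : tau = comb Pi w.
  by rewrite /tau hE (tr_comb hPP hherm) -/Z -fmorphV comb_scale.
pose g (i : 'I_M.+1) := if i == ord0 then t0^-1 else 0.
have hgamma : gamma = comb Pi g.
  rewrite /gamma (trPiE hPP hherm) -fmorphV /comb (bigD1 ord0) //= big1 ?addr0.
    by rewrite /g eqxx.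
  by move=> i /negbTE hi; rewrite /g hi scale0r.
have w_ge0 i : 0 <= w i.
  by apply: mulr_ge0; [rewrite invr_ge0; exact: ltW | exact/ltW/expR_gt0].
have sumw : \sum_i w i * t Pi i = 1.
  rewrite /w; under eq_bigr do rewrite -mulrA.
  by rewrite -mulr_sumr mulVf // gt_eqF.
pose p := w ord0 * t0.
have rest : \sum_(i | i != ord0) w i * t Pi i = 1 - p.
  by rewrite -sumw [in RHS](bigD1 ord0) //= addrAC subrr add0r.
have p_le1 : p <= 1.
  rewrite -sumw (bigD1 ord0) //= lerDl; apply: sumr_ge0 => i _.
  by apply: mulr_ge0 => //; exact/ltW/(t_gt0 hPP hherm hnz).
have hF : fidelity tau gamma = p.
  rewrite /fidelity htau hgamma /mxsqrt !(mxfun_comb hPP hsum hherm) (comb_mul hPP).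
  rewrite (trnorm_comb hPP hsum hherm) (bigD1 ord0) //= big1 ?addr0; last first.
    by move=> i /negbTE hi; rewrite /g hi sqrtr0 mulr0 normr0 mul0r.
  rewrite /g eqxx ger0_norm ?mulr_ge0 ?sqrtr_ge0 //.
  rewrite !exprMn !sqr_sqrtr ?invr_ge0 ?(ltW t0_gt0) //.
  rewrite /p -/t0; field; exact: lt0r_neq0.
split.
  rewrite hF htau hgamma comb_sub (trnorm_comb hPP hsum hherm) (bigD1 ord0) //=.
  rewrite (eq_bigr (fun i => w i * t Pi i)); last first.
    move=> i /negbTE hi; rewrite /g hi subr0 ger0_norm //.
  rewrite rest /g eqxx ler0_norm; last first.
    rewrite subr_le0 -[w ord0](mulfK (lt0r_neq0 t0_gt0)) -/p.
    rewrite -[X in _ <= X]mul1r; apply: ler_wpM2r => //; rewrite invr_ge0; exact: ltW.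
  rewrite /p -/t0; field; exact: lt0r_neq0.
rewrite hF /relent hgamma htau /mxln !(mxfun_comb hPP hsum hherm) comb_sub (comb_mul hPP).
rewrite (tr_comb hPP hherm) /= (bigD1 ord0) //= big1 ?addr0; last first.
  by move=> i /negbTE hi; rewrite /g hi !mul0r.
have w0_gt0 : 0 < w ord0.
  by apply: mulr_gt0; [rewrite invr_gt0 | exact: expR_gt0].
have L1 : ln (w ord0 * t0) = ln (w ord0) + ln t0 by apply: lnM; rewrite posrE.
have L2 : ln t0^-1 = - ln t0 by apply: lnV; rewrite posrE.
rewrite /g eqxx /p L1 L2 -/t0.
field; exact: lt0r_neq0.
Qed.
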